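(* Let $S$ be a $\Gamma$-hemiring, let $\mu$ be a prime fuzzy h-ideal of $S$ and let $x\in S$. Then for all $y\in S$, $\langle x,\mu\rangle(y)=\inf_{s_1\in S,\ \eta,\delta\in\Gamma}\langle x\eta s_1\delta x,\mu\rangle(y)$.
   Context: A $\Gamma$-hemiring is a pair of additive commutative semigroups with zero $S$ and $\Gamma$ with a map $S\times\Gamma\times S\to S$, $(a,\alpha,b)\mapsto a\alpha b$, such that for all $a,b,c\in S$, $\alpha,\beta\in\Gamma$: $(a+b)\alpha c=a\alpha c+b\alpha c$; $a\alpha(b+c)=a\alpha b+a\alpha c$; $a(\alpha+\beta)b=a\alpha b+a\beta b$; $a\alpha(b\beta c)=(a\alpha b)\beta c$; $0\alpha a=0=a\alpha0$; $a0b=0=b0a$. A fuzzy h-ideal of $S$ is a map $\mu:S\to[0,1]$, not identically $0$, such that for all $x,y,a,b,z\in S$, $\gamma\in\Gamma$: $\mu(x+y)\ge\min\{\mu(x),\mu(y)\}$; $\mu(x\gamma y)\ge\mu(x)$ and $\mu(x\gamma y)\ge\mu(y)$; $x+a+z=b+z$ implies $\mu(x)\ge\min\{\mu(a),\mu(b)\}$. For fuzzy subsets $\sigma,\theta$, the h-product is $(\sigma\Gamma_h\theta)(x)=\sup\min\{\sigma(a_1),\sigma(a_2),\theta(b_1),\theta(b_2)\}$, the supremum over all $z,a_1,a_2,b_1,b_2\in S$, $\gamma,\delta\in\Gamma$ with $x+a_1\gamma b_1+z=a_2\delta b_2+z$, and $0$ if no such expression exists. Inclusion means pointwise $\le$.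 A fuzzy h-ideal $\mu$ is prime if it is not constant and for any fuzzy h-ideals $\sigma,\theta$, $\sigma\Gamma_h\theta\subseteq\mu$ implies $\sigma\subseteq\mu$ or $\theta\subseteq\mu$. The extension of $\mu$ by $x$ is $\langle x,\mu\rangle(y)=\inf_{s\in S,\ \alpha,\gamma\in\Gamma}\mu(x\alpha s\gamma y)$. *)

(* Defs.v *)
From HB Require Import structures.
From mathcomp Require Import all_boot all_order all_algebra.
From mathcomp Require Import boolp classical_sets reals Rstruct.
Set Implicit Arguments. Unset Strict Implicit. Unset Printing Implicit Defensive.
Import Order.TTheory GRing.Theory Num.Theory.
Local Open Scope classical_set_scope.
Local Open Scope ring_scope.

Record GammaHemiring := {
  carS : Type;
  carG : Type;
  addS : carS -> carS -> carS;
  zeroS : carS;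
  addG : carG -> carG -> carG;
  zeroG : carG;
  gop : carS -> carG -> carS -> carS;
  addSA : forall a b c, addS a (addS b c) = addS (addS a b) c;
  addSC : forall a b, addS a b = addS b a;
  add0S : forall a, addS zeroS a = a;
  addGA : forall a b c, addG a (addG b c) = addG (addG a b) c;
  addGC : forall a b, addG a b = addG b a;
  add0G : forall a, addG zeroG a = a;
  gopDl : forall a b c al, gop (addS a b) al c = addS (gop a al c) (gop b al c);
  gopDr : forall a b c al, gop a al (addS b c) = addS (gop a al b) (gop a al c);
  gopDm : forall a b al be, gop a (addG al be) b = addS (gop a al b) (gop a be b);
  gopA : forall a b c al be, gop a al (gop b be c) = gop (gop a al b) be c;
  gop0l : forall a al, gop zeroS al a = zeroS;
  gop0r : forall a al, gop a al zeroS = zeroS;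
  gop0m : forall a b, gop a zeroG b = zeroS /\ gop b zeroG a = zeroS
}.

Definition fuzzy (S : GammaHemiring) := carS S -> Rdefinitions.RbaseSymbolsImpl.R.

Definition fuzzy_subset (S : GammaHemiring) (f : fuzzy S) : Prop :=
  forall x, 0 <= f x <= 1.

Definition is_fuzzy_h_ideal (S : GammaHemiring) (mu : fuzzy S) : Prop :=
  fuzzy_subset mu /\
  (exists x, mu x <> 0) /\
  (forall x y, mu (addS x y) >= Order.min (mu x) (mu y)) /\
  (forall x y g, mu (gop x g y) >= mu x /\ mu (gop x g y) >= mu y) /\
  (forall x a b z, addS (addS x a) z = addS b z ->
     mu x >= Order.min (mu a) (mu b)).

Definition hprod (S : GammaHemiring) (sg th : fuzzy S) : fuzzy S := fun x =>
  let A := [set v : Rdefinitions.RbaseSymbolsImpl.R | exists (z a1 a2 b1 b2 : carS S) (g d : carG S),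
              addS (addS x (gop a1 g b1)) z = addS (gop a2 d b2) z /\
              v = Order.min (Order.min (sg a1) (sg a2)) (Order.min (th b1) (th b2))] in
  if pselect (A !=set0) then sup A else 0.

Definition fincl (S : GammaHemiring) (sg th : fuzzy S) : Prop :=
  forall x, sg x <= th x.

Definition is_prime_fuzzy_h_ideal (S : GammaHemiring) (mu : fuzzy S) : Prop :=
  is_fuzzy_h_ideal mu /\
  (exists x y, mu x <> mu y) /\
  (forall sg th : fuzzy S, is_fuzzy_h_ideal sg -> is_fuzzy_h_ideal th ->
     fincl (hprod sg th) mu -> fincl sg mu \/ fincl th mu).

Definition ext (S : GammaHemiring) (x : carS S) (mu : fuzzy S) : fuzzy S :=
  fun y => inf [set mu (gop (gop x (t.1.1) (t.1.2)) (t.2) y)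
                | t in [set: (carG S * carS S) * carG S]].

(* Main.v *)
Require Import Defs.
From mathcomp Require Import all_boot all_order all_algebra.
From mathcomp Require Import boolp classical_sets reals Rstruct.
Set Implicit Arguments. Unset Strict Implicit.
Import Order.TTheory GRing.Theory Num.Theory.
Local Open Scope classical_set_scope.
Local Open Scope ring_scope.

Definition hpred (S : GammaHemiring) (P : carS S -> Prop) : Prop :=
  P (zeroS S) /\
  (forall x y, P x -> P y -> P (addS x y)) /\
  (forall x y g, P x \/ P y -> P (gop x g y)) /\
  (forall x a b z, addS (addS x a) z = addS b z -> P a -> P b -> P x).

Definition lvl (S : GammaHemiring) (c : Rdefinitions.RbaseSymbolsImpl.R)
  (P : carS S -> Prop) : fuzzy S :=
  fun z => if pselect (P z) then c else 0.

Section L.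
Variables (S : GammaHemiring) (c : Rdefinitions.RbaseSymbolsImpl.R) (P : carS S -> Prop).
Lemma lvlT z : P z -> lvl c P z = c.
Proof. by rewrite /lvl; case: (pselect (P z)). Qed.
Lemma lvlF z : ~ P z -> lvl c P z = 0.
Proof. by rewrite /lvl; case: (pselect (P z)). Qed.
Lemma lvl_ge0 z : 0 < c -> 0 <= lvl c P z.
Proof. by move=> c0; rewrite /lvl; case: (pselect (P z)) => ? //; apply: ltW. Qed.
End L.

Lemma lvl_ideal (S : GammaHemiring) (c : Rdefinitions.RbaseSymbolsImpl.R) (P : carS S -> Prop) :
  0 < c -> c <= 1 -> hpred P -> is_fuzzy_h_ideal (lvl c P).
Proof.
move=> c0 c1 [P0 [PD [PM PH]]]; split; [|split; [|split; [|split]]].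
- move=> z; apply/andP; split; first exact: lvl_ge0.
  by case: (pselect (P z)) => h; [rewrite lvlT|rewrite lvlF ?ler01].
- exists (zeroS S); rewrite lvlT // => h; by rewrite h ltxx in c0.
- move=> x y; case: (pselect (P x)) => hx; last by rewrite ge_min lvlF // lvl_ge0.
  case: (pselect (P y)) => hy; last by rewrite ge_min (@lvlF _ c P y hy) lvl_ge0 ?orbT.
  by rewrite !lvlT // ?minxx //; apply: PD.
- move=> x y g; split.
  + case: (pselect (P x)) => hx; last by rewrite lvlF // lvl_ge0.
    by rewrite !lvlT //; apply: PM; left.
  + case: (pselect (P y)) => hy; last by rewrite (@lvlF _ c P y hy) lvl_ge0.
    by rewrite !lvlT //; apply: PM; right.
- move=> x a b z e.
  case: (pselect (P a)) => ha; last by rewrite ge_min lvlF // lvl_ge0.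
  case: (pselect (P b)) => hb; last by rewrite ge_min (@lvlF _ c P b hb) lvl_ge0 ?orbT.
  by rewrite !lvlT ?minxx //; apply: PH e ha hb.
Qed.

Lemma mu_ge0 (S : GammaHemiring) (mu : fuzzy S) z : is_fuzzy_h_ideal mu -> 0 <= mu z.
Proof. by case=> h _; case/andP: (h z). Qed.

Lemma prime_lvl (S : GammaHemiring) (mu : fuzzy S) (c : Rdefinitions.RbaseSymbolsImpl.R)
  (P1 P2 : carS S -> Prop) :
  is_prime_fuzzy_h_ideal mu -> 0 < c -> c <= 1 -> hpred P1 -> hpred P2 ->
  (forall u v g, P1 u -> P2 v -> c <= mu (gop u g v)) ->
  (forall u, P1 u -> c <= mu u) \/ (forall v, P2 v -> c <= mu v).
Proof.
move=> [Hid [_ Hpr]] c0 c1 h1 h2 Hp.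
have Hid' := Hid; case: Hid' => _ [_ [_ [_ Hh]]].
have Hf : fincl (hprod (lvl c P1) (lvl c P2)) mu.
  move=> z; rewrite /hprod; case: pselect => [ne|?]; last exact: mu_ge0.
  apply: ge_sup => // v [w [a1 [a2 [b1 [b2 [g [d [e ->]]]]]]]].
  case: (pselect (P1 a1)) => ha1; last first.
    apply: le_trans (mu_ge0 _ Hid); rewrite ge_min ge_min (@lvlF _ c P1 a1 ha1) lexx //.
  case: (pselect (P1 a2)) => ha2; last first.
    apply: le_trans (mu_ge0 _ Hid); rewrite ge_min ge_min (@lvlF _ c P1 a2 ha2) lexx orbT //.
  case: (pselect (P2 b1)) => hb1; last first.
    apply: le_trans (mu_ge0 _ Hid); rewrite ge_min (ge_min _ (lvl c P2 b1)) (@lvlF _ c P2 b1 hb1) lexx orbT //.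
  case: (pselect (P2 b2)) => hb2; last first.
    apply: le_trans (mu_ge0 _ Hid); rewrite ge_min (ge_min _ (lvl c P2 b1)) (@lvlF _ c P2 b2 hb2) lexx !orbT //.
  rewrite (lvlT _ ha1) (lvlT _ ha2) (lvlT _ hb1) (lvlT _ hb2) !minxx.
  apply: le_trans (Hh _ _ _ _ e); rewrite le_min; apply/andP; split; exact: Hp.
case: (Hpr _ _ (lvl_ideal c0 c1 h1) (lvl_ideal c0 c1 h2) Hf).
- by move=> H; left => u hu; have := H u; rewrite lvlT.
- by move=> H; right => u hu; have := H u; rewrite lvlT.
Qed.

Lemma mu0_ge (S : GammaHemiring) (mu : fuzzy S) z :
  is_fuzzy_h_ideal mu -> mu z <= mu (zeroS S).
Proof.
case=> _ [_ [_ [Hm _]]]; have [_ h] := Hm (zeroS S) z (zeroG S).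
by rewrite gop0l in h.
Qed.

Lemma hpred_of (S : GammaHemiring) (mu : fuzzy S) (c : Rdefinitions.RbaseSymbolsImpl.R)
  (I : Type) (F : I -> carS S -> carS S) :
  is_fuzzy_h_ideal mu -> c <= mu (zeroS S) ->
  (forall i, F i (zeroS S) = zeroS S) ->
  (forall i p q, F i (addS p q) = addS (F i p) (F i q)) ->
  (forall x y g, (forall i, c <= mu (F i x)) \/ (forall i, c <= mu (F i y)) ->
     forall i, c <= mu (F i (gop x g y))) ->
  hpred (fun u => forall i, c <= mu (F i u)).
Proof.
move=> [_ [_ [Ha [_ Hh]]]] c0 F0 FD FM; split; [|split; [|split]].
- by move=> i; rewrite F0.
- move=> x y hx hy i; rewrite FD; apply: le_trans (Ha _ _).
  by rewrite le_min hx hy.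
- exact: FM.
- move=> x a b z e ha hb i.
  have e' : addS (addS (F i x) (F i a)) (F i z) = addS (F i b) (F i z).
    by rewrite -!FD e.
  apply: le_trans (Hh _ _ _ _ e'); by rewrite le_min ha hb.
Qed.

Lemma hpredT (S : GammaHemiring) : hpred (fun _ : carS S => True).
Proof. by split; [|split; [|split]]. Qed.

Lemma keyK (S : GammaHemiring) (mu : fuzzy S) (c : Rdefinitions.RbaseSymbolsImpl.R)
  (a b : carS S) :
  is_prime_fuzzy_h_ideal mu -> 0 < c ->
  (forall e s d, c <= mu (gop (gop a e s) d b)) -> c <= mu a \/ c <= mu b.
Proof.
move=> Hp c0 H.
have Hid : is_fuzzy_h_ideal mu by case: Hp.
have Hid' := Hid; case: Hid' => Hfs [_ [_ [Hm _]]].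
have c1 : c <= 1.
  apply: le_trans (H (zeroG S) (zeroS S) (zeroG S)) _.
  by case/andP: (Hfs (gop (gop a (zeroG S) (zeroS S)) (zeroG S) b)).
have cz : c <= mu (zeroS S).
  exact: le_trans (H (zeroG S) (zeroS S) (zeroG S)) (mu0_ge _ Hid).
pose F1 (i : (carG S * carS S) * carG S) u := gop (gop u i.1.1 i.1.2) i.2 b.
pose P1 u := forall i, c <= mu (F1 i u).
have hP1 : hpred P1.
  apply: hpred_of => //.
  - by move=> i; rewrite /F1 !gop0l.
  - by move=> i p q; rewrite /F1 !gopDl.
  - move=> x y g [hx|hy] i; rewrite /F1.
    + rewrite -[gop (gop x g y) i.1.1 i.1.2]gopA.
      exact: (hx ((g, gop y i.1.1 i.1.2), i.2)).
    + rewrite -[gop (gop x g y) i.1.1 i.1.2]gopA -gopA.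
      apply: le_trans (hy i) _; exact: (Hm _ _ _).2.
have P1a : P1 a by case=> [[e s] d]; exact: H.
pose F2 (i : {p : carS S * carG S | P1 p.1}) v := gop (sval i).1 (sval i).2 v.
pose P2 v := forall i, c <= mu (F2 i v).
have hP2 : hpred P2.
  apply: hpred_of => //.
  - by move=> i; rewrite /F2 gop0r.
  - by move=> i p q; rewrite /F2 gopDr.
  - move=> x y g [hx|hy] [[u h] hu]; rewrite /F2 /= gopA.
    + apply: le_trans (hx (exist _ (u, h) hu)) _; exact: (Hm _ _ _).1.
    + have hu' : P1 (gop u h x) by case: hP1 => _ [_ [hM _]]; apply: hM; left.
      exact: (hy (exist _ (gop u h x, g) hu')).
have [HA|HB] := prime_lvl Hp c0 c1 hP1 hP2 (fun u v g hu hv => hv (exist _ (u, g) hu)).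
  by left; apply: HA.
right.
have Hsb : forall s d, c <= mu (gop s d b).
  move=> s d; apply: HB => -[[u g] hu]; rewrite /F2 /= gopA.
  exact: (hu ((g, s), d)).
pose F3 (i : carS S * carG S) v := gop i.1 i.2 v.
pose P3 v := forall i, c <= mu (F3 i v).
have hP3 : hpred P3.
  apply: hpred_of => //.
  - by move=> i; rewrite /F3 gop0r.
  - by move=> i p q; rewrite /F3 gopDr.
  - move=> x y g [hx|hy] [s d]; rewrite /F3 /= gopA.
    + apply: le_trans (hx (s, d)) _; exact: (Hm _ _ _).1.
    + exact: (hy (gop s d x, g)).
have [HA'|HB'] := prime_lvl Hp c0 c1 (@hpredT S) hP3 (fun u v g _ hv => hv (u, g)).
  exact: HA'.
apply: HB' => -[s d]; exact: Hsb.
Qed.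

Lemma ext_ge0 (S : GammaHemiring) (mu : fuzzy S) z y :
  is_fuzzy_h_ideal mu -> 0 <= ext z mu y.
Proof.
move=> Hid; apply: lb_le_inf.
  by exists (mu (gop (gop z (zeroG S) (zeroS S)) (zeroG S) y)),
    ((zeroG S, zeroS S), zeroG S).
by move=> _ [t _ <-]; exact: mu_ge0.
Qed.

Lemma ext_le (S : GammaHemiring) (mu : fuzzy S) z y a s g :
  is_fuzzy_h_ideal mu -> ext z mu y <= mu (gop (gop z a s) g y).
Proof.
move=> Hid; apply: ge_inf; last by exists ((a, s), g).
by exists 0 => _ [t _ <-]; exact: mu_ge0.
Qed.

Theorem proposition3p18 (S : GammaHemiring) (mu : fuzzy S) (x : carS S) :
  is_prime_fuzzy_h_ideal mu ->
  forall y : carS S,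
    ext x mu y =
    inf [set ext (gop (gop x (t.1.1) (t.1.2)) (t.2) x) mu y
         | t in [set: (carG S * carS S) * carG S]].
Proof.
move=> Hp y.
have Hid : is_fuzzy_h_ideal mu by case: Hp.
have Hid' := Hid; case: Hid' => Hfs [_ [_ [Hm _]]].
have assoc : forall e s1 d a s g,
  gop (gop (gop (gop x e s1) d x) a s) g y =
  gop (gop x e s1) d (gop (gop x a s) g y).
  by move=> e s1 d a s g; rewrite -[gop (gop (gop _ e s1) d x) a s]gopA -gopA.
apply: le_anti; apply/andP; split.
- apply: lb_le_inf.
    by exists (ext (gop (gop x (zeroG S) (zeroS S)) (zeroG S) x) mu y),
      ((zeroG S, zeroS S), zeroG S).
  move=> _ [[[e s1] d] _ <-]; apply: lb_le_inf.
    by exists (mu (gop (gop (gop (gop x e s1) d x) (zeroG S) (zeroS S)) (zeroG S) y)),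
      ((zeroG S, zeroS S), zeroG S).
  move=> _ [[[a s] g] _ <-] /=; rewrite assoc.
  apply: le_trans (ext_le _ _ a s g Hid) _; exact: (Hm _ _ _).2.
- apply: lb_le_inf.
    by exists (mu (gop (gop x (zeroG S) (zeroS S)) (zeroG S) y)),
      ((zeroG S, zeroS S), zeroG S).
  move=> _ [[[a s] g] _ <-] /=.
  set c := inf _.
  have [c0|c0] := leP c 0; first exact: le_trans c0 (mu_ge0 _ Hid).
  have Hk : forall e s1 d, c <= mu (gop (gop x e s1) d (gop (gop x a s) g y)).
    move=> e s1 d; rewrite -assoc.
    apply: le_trans (ext_le _ _ a s g Hid).
    apply: ge_inf; last by exists ((e, s1), d).
    by exists 0 => _ [t _ <-]; exact: ext_ge0.
  case: (keyK Hp c0 Hk) => // hx.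
  apply: le_trans hx _; apply: le_trans (Hm _ _ _).1; exact: (Hm _ _ _).1.
Qed.
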